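(* Let two balanced mass action chemical reaction networks (networks 1 and 2) share all their boundary chemical species $x_b\in\mathbb{R}^b_+$: network 1 has species vector $(\hat x_1,x_b)$, complex stoichiometric matrix $Z_1=\begin{bmatrix}\hat Z_1\\ Z_{b1}\end{bmatrix}$, incidence matrix $B_1$ and vector of equilibrium constants $K_1^{eq}$; network 2 has species vector $(x_b,\hat x_2)$, complex stoichiometric matrix $Z_2=\begin{bmatrix}Z_{b2}\\ \hat Z_2\end{bmatrix}$, incidence matrix $B_2$ and vector of equilibrium constants $K_2^{eq}$. Then the interconnected network is again balanced if and only if there exist $\hat x_1^{**},\hat x_2^{**},x_b^{**}$ with positive entries such that $$\mathrm{Ln}\begin{bmatrix}K_1^{eq}\\ K_2^{eq}\end{bmatrix}=\begin{bmatrix}B_1^T\hat Z_1^T & 0 & B_1^TZ_{b1}^T\\ 0 & B_2^T\hat Z_2^T & B_2^TZ_{b2}^T\end{bmatrix}\mathrm{Ln}\begin{bmatrix}\hat x_1^{**}\\ \hat x_2^{**}\\ x_b^{**}\end{bmatrix}.$$ Such a thermodynamic equilibrium of the interconnected network exists if there is a partition $\{1,\dots,b\}=I_1\cup I_2$ such that all columns of $B_1^TZ_{b1}^T$ with index in $I_1$ lie in $\operatorname{im} B_1^T\hat Z_1^T$, and all columns of $B_2^TZ_{b2}^T$ with index in $I_2$ lie in $\operatorname{im} B_2^T\hat Z_2^T$.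
   Context: A mass action network has species concentrations $x\in\mathbb{R}^m_+$, complexes (distinct left/right-hand sides of reactions) and reactions; its complex stoichiometric matrix $Z$ has as $\rho$-th column the species composition of complex $\rho$; its complex graph has an edge for each reaction $j$ from the substrate complex $\mathcal{S}_j$ to the product complex $\mathcal{P}_j$, with incidence matrix $B$ ($-1$ at tail, $+1$ at head). Rates $v_j(x)=k_j^{\mathrm{forw}}\exp(Z_{\mathcal{S}_j}^T\mathrm{Ln}(x))-k_j^{\mathrm{rev}}\exp(Z_{\mathcal{P}_j}^T\mathrm{Ln}(x))$, dynamics $\dot x=ZBv(x)$. A thermodynamic equilibrium is $x^*\in\mathbb{R}^m_+$ with $v(x^* )=0$; the network is balanced if one exists (then all $k_j^{\mathrm{forw}},k_j^{\mathrm{rev}}>0$). The vector of equilibrium constants $K^{eq}$ has entries $k_j^{\mathrm{forw}}/k_j^{\mathrm{rev}}$. $\mathrm{Ln}$ is the componentwise logarithm. The interconnected network has species vector $(\hat x_1,x_b,\hat x_2)$ (the shared species $x_b$ identified), reaction set the union of the reactions of both networks with the same rate constants, complex-graph incidence matrix $B=\begin{bmatrix}B_1&0\\0&B_2\end{bmatrix}$, and complex stoichiometric matrix $Z=\begin{bmatrix}\hat Z_1&0\\ Z_{b1}&Z_{b2}\\ 0&\hat Z_2\end{bmatrix}$; its equilibrium constant vector is $(K_1^{eq},K_2^{eq})$. *)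

(* Defs.v *)
From HB Require Import structures.
From mathcomp Require Import all_boot all_order all_algebra.
From mathcomp Require Import all_classical all_reals all_analysis.
Set Implicit Arguments. Unset Strict Implicit. Unset Printing Implicit Defensive.
Import Order.TTheory GRing.Theory Num.Theory.
Local Open Scope ring_scope.

Section MassAction.
Variable R : realType.

Definition Lnv (m : nat) (x : 'cV[R]_m) : 'cV[R]_m := map_mx (@ln R) x.

Definition posv (m : nat) (x : 'cV[R]_m) : Prop := forall i, 0 < x i 0.

(* incidence matrix of the complex graph: reaction j is an edge from the
   substrate complex S j to the product complex P j; -1 at tail, +1 at head *)
Definition incidence (c r : nat) (S P : 'I_r -> 'I_c) : 'M[R]_(c, r) :=
  \matrix_(i, j) ((i == P j)%:R - (i == S j)%:R).

Definition rate (m c r : nat) (Z : 'M[R]_(m, c)) (S P : 'I_r -> 'I_c)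
  (kf kr : 'I_r -> R) (x : 'cV[R]_m) : 'cV[R]_r :=
  \col_j (kf j * expR (((col (S j) Z)^T *m Lnv x) 0 0)
          - kr j * expR (((col (P j) Z)^T *m Lnv x) 0 0)).

Definition thermo_eq (m c r : nat) (Z : 'M[R]_(m, c)) (S P : 'I_r -> 'I_c)
  (kf kr : 'I_r -> R) (x : 'cV[R]_m) : Prop :=
  posv x /\ rate Z S P kf kr x = 0.

Definition balanced (m c r : nat) (Z : 'M[R]_(m, c)) (S P : 'I_r -> 'I_c)
  (kf kr : 'I_r -> R) : Prop :=
  exists x : 'cV[R]_m, thermo_eq Z S P kf kr x.

Definition Keq (r : nat) (kf kr : 'I_r -> R) : 'cV[R]_r :=
  \col_j (kf j / kr j).

Definition join_cplx (c1 c2 r1 r2 : nat) (S1 : 'I_r1 -> 'I_c1)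
  (S2 : 'I_r2 -> 'I_c2) (j : 'I_(r1 + r2)) : 'I_(c1 + c2) :=
  match fintype.split j with
  | inl j1 => lshift c2 (S1 j1)
  | inr j2 => rshift c1 (S2 j2)
  end.

Definition join_const (r1 r2 : nat) (k1 : 'I_r1 -> R) (k2 : 'I_r2 -> R)
  (j : 'I_(r1 + r2)) : R :=
  match fintype.split j with
  | inl j1 => k1 j1
  | inr j2 => k2 j2
  end.

(* complex stoichiometric matrix of the interconnected network,
   species ordered (xhat1, xb, xhat2) *)
Definition interZ (n1 b n2 c1 c2 : nat) (Zh1 : 'M[R]_(n1, c1))
  (Zb1 : 'M[R]_(b, c1)) (Zb2 : 'M[R]_(b, c2)) (Zh2 : 'M[R]_(n2, c2))
  : 'M[R]_(n1 + b + n2, c1 + c2) :=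
  col_mx (col_mx (row_mx Zh1 0) (row_mx Zb1 Zb2)) (row_mx 0 Zh2).

End MassAction.

(* Main.v *)
Require Import Defs.
From HB Require Import structures.
From mathcomp Require Import all_boot all_order all_algebra.
From mathcomp Require Import all_classical all_reals all_analysis.
Import Order.TTheory GRing.Theory Num.Theory.
Local Open Scope ring_scope.

Section H.
Variable R : realType.

Lemma expeq (kf kr a b : R) : 0 < kf -> 0 < kr ->
  (kf * expR a - kr * expR b == 0) = (ln (kf / kr) == b - a).
Proof.
move=> hf hr.
have q : 0 < kf / kr by rewrite divr_gt0.
have ea := expR_gt0 a; have eb := expR_gt0 b.
apply/idP/idP => /eqP h; apply/eqP.
- have -> : kf / kr = expR (b - a).
    rewrite expRB; apply/eqP; rewrite eqr_div ?(gt_eqF hr) ?(gt_eqF ea) //.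
    move/eqP: h; rewrite subr_eq0 => /eqP ->; apply/eqP; rewrite mulrC //.
  by rewrite expRK.
- have : expR (ln (kf / kr)) = expR (b - a) by rewrite h.
  rewrite lnK ?posrE // expRB => /eqP; rewrite eqr_div ?(gt_eqF hr) ?(gt_eqF ea) //.
  by move/eqP => ->; rewrite mulrC subrr.
Qed.

Lemma rate0 (m c r : nat) (Z : 'M[R]_(m, c)) S P (kf kr : 'I_r -> R) x :
  (forall j, 0 < kf j) -> (forall j, 0 < kr j) ->
  rate Z S P kf kr x = 0 <->
  forall j, ln (kf j / kr j) = (Z^T *m Lnv x) (P j) 0 - (Z^T *m Lnv x) (S j) 0.
Proof.
move=> hf hr.
have E : forall p, ((col p Z)^T *m Lnv x) 0 0 = (Z^T *m Lnv x) p 0.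
  by move=> p; rewrite !mxE; apply: eq_bigr => k _; rewrite !mxE.
have Er : forall j, rate Z S P kf kr x j 0 =
   kf j * expR ((Z^T *m Lnv x) (S j) 0) - kr j * expR ((Z^T *m Lnv x) (P j) 0).
  by move=> j; rewrite /rate mxE !E.
split.
- move=> h j; apply/eqP; rewrite -expeq //.
  have := congr1 (fun M : 'M[R]_(r,1) => M j 0) h; by rewrite /= Er => ->; rewrite mxE.
- move=> h; apply/matrixP => j k; rewrite ord1 Er; have -> : (0 : 'M[R]_(r,1)) j 0 = 0 by rewrite mxE.
  apply/eqP.
  by rewrite expeq // h.
Qed.

Lemma Bmul (c r : nat) S P (V : 'cV[R]_c) (j : 'I_r) :
  ((incidence R S P)^T *m V) j 0 = V (P j) 0 - V (S j) 0.
Proof.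
rewrite mxE.
under eq_bigr => i _ do rewrite !mxE mulrBl.
rewrite sumrB.
rewrite (bigD1 (P j)) //= eqxx mul1r big1 ?addr0; last first.
  by move=> i /negbTE ->; rewrite mul0r.
rewrite (bigD1 (S j)) //= eqxx mul1r big1 ?addr0 //.
by move=> i /negbTE ->; rewrite mul0r.
Qed.

Lemma Keq_iff (c r : nat) S P (kf kr : 'I_r -> R) (V : 'cV[R]_c) :
  Lnv (Keq kf kr) = (incidence R S P)^T *m V <->
  forall j, ln (kf j / kr j) = V (P j) 0 - V (S j) 0.
Proof.
split.
- by move=> /matrixP h j; move: (h j 0); rewrite Bmul !mxE.
- by move=> h; apply/matrixP => j k; rewrite ord1 Bmul !mxE h.
Qed.

Lemma posv_col (m1 m2 : nat) (a : 'cV[R]_m1) (b : 'cV[R]_m2) :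
  posv (col_mx a b) <-> posv a /\ posv b.
Proof.
split.
- move=> h; split => i.
  + by move: (h (lshift m2 i)); rewrite col_mxEu.
  + by move: (h (rshift m1 i)); rewrite col_mxEd.
- case=> ha hb i; rewrite -(splitK i); case: (fintype.split i) => k /=; by rewrite ?col_mxEu ?col_mxEd.
Qed.

Lemma Lnv_col (m1 m2 : nat) (a : 'cV[R]_m1) (b : 'cV[R]_m2) :
  Lnv (col_mx a b) = col_mx (Lnv a) (Lnv b).
Proof. by rewrite /Lnv map_col_mx. Qed.

Lemma net_eq (n b c : nat) (Zh : 'M[R]_(n, c)) (Zb : 'M[R]_(b, c)) xh xb :
  (col_mx Zh Zb)^T *m Lnv (col_mx xh xb) = Zh^T *m Lnv xh + Zb^T *m Lnv xb.
Proof. by rewrite tr_col_mx Lnv_col mul_row_col. Qed.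

Lemma interZ_mul (n1 b n2 c1 c2 : nat) Zh1 Zb1 Zb2 Zh2 xh1 xb xh2 :
  (interZ (R:=R) (n1:=n1) (b:=b) (n2:=n2) (c1:=c1) (c2:=c2) Zh1 Zb1 Zb2 Zh2)^T
     *m Lnv (col_mx (col_mx xh1 xb) xh2) =
  col_mx (Zh1^T *m Lnv xh1 + Zb1^T *m Lnv xb) (Zb2^T *m Lnv xb + Zh2^T *m Lnv xh2).
Proof.
rewrite /interZ !tr_col_mx !tr_row_mx !Lnv_col !mul_row_col !mul_col_mx.
by rewrite !trmx0 !mul0mx !add_col_mx !addr0 !add0r.
Qed.

Lemma join_l (c1 c2 r1 r2 : nat) (S1 : 'I_r1 -> 'I_c1) (S2 : 'I_r2 -> 'I_c2) j :
  join_cplx S1 S2 (lshift r2 j) = lshift c2 (S1 j).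
Proof. by rewrite /join_cplx (unsplitK (inl j)). Qed.
Lemma join_r (c1 c2 r1 r2 : nat) (S1 : 'I_r1 -> 'I_c1) (S2 : 'I_r2 -> 'I_c2) j :
  join_cplx S1 S2 (rshift r1 j) = rshift c1 (S2 j).
Proof. by rewrite /join_cplx (unsplitK (inr j)). Qed.
Lemma joinc_l (r1 r2 : nat) (k1 : 'I_r1 -> R) (k2 : 'I_r2 -> R) j :
  join_const k1 k2 (lshift r2 j) = k1 j.
Proof. by rewrite /join_const (unsplitK (inl j)). Qed.
Lemma joinc_r (r1 r2 : nat) (k1 : 'I_r1 -> R) (k2 : 'I_r2 -> R) j :
  join_const k1 k2 (rshift r1 j) = k2 j.
Proof. by rewrite /join_const (unsplitK (inr j)). Qed.


Lemma join_pos (r1 r2 : nat) (k1 : 'I_r1 -> R) (k2 : 'I_r2 -> R) :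
  (forall j, 0 < k1 j) -> (forall j, 0 < k2 j) -> forall j, 0 < join_const k1 k2 j.
Proof. by move=> h1 h2 j; rewrite /join_const; case: (fintype.split j). Qed.

Lemma Lnv_exp (m : nat) (u : 'cV[R]_m) : Lnv (map_mx expR u) = u.
Proof. by apply/matrixP => i j; rewrite !mxE expRK. Qed.

Lemma posv_exp (m : nat) (u : 'cV[R]_m) : posv (map_mx expR u).
Proof. by move=> i; rewrite mxE expR_gt0. Qed.

Lemma balI_iff (n1 b n2 c1 c2 r1 r2 : nat)
  (Zh1 : 'M[R]_(n1, c1)) (Zb1 : 'M[R]_(b, c1))
  (Zb2 : 'M[R]_(b, c2)) (Zh2 : 'M[R]_(n2, c2))
  (S1 P1 : 'I_r1 -> 'I_c1) (S2 P2 : 'I_r2 -> 'I_c2)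
  (kf1 kr1 : 'I_r1 -> R) (kf2 kr2 : 'I_r2 -> R)
  (hkf1 : forall j, 0 < kf1 j) (hkr1 : forall j, 0 < kr1 j)
  (hkf2 : forall j, 0 < kf2 j) (hkr2 : forall j, 0 < kr2 j) :
  balanced (interZ Zh1 Zb1 Zb2 Zh2)
                (join_cplx S1 S2) (join_cplx P1 P2)
                (join_const kf1 kf2) (join_const kr1 kr2) <->
  exists (xh1 : 'cV[R]_n1) (xh2 : 'cV[R]_n2) (xb : 'cV[R]_b),
   [/\ posv xh1, posv xh2, posv xb,
     Lnv (Keq kf1 kr1) = ((incidence R S1 P1)^T *m Zh1^T) *m Lnv xh1
                         + ((incidence R S1 P1)^T *m Zb1^T) *m Lnv xb &
     Lnv (Keq kf2 kr2) = ((incidence R S2 P2)^T *m Zh2^T) *m Lnv xh2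
                         + ((incidence R S2 P2)^T *m Zb2^T) *m Lnv xb].
Proof.
have hf := @join_pos _ _ _ _ hkf1 hkf2; have hr := @join_pos _ _ _ _ hkr1 hkr2.
split.
- case=> x [px hx].
  rewrite -(vsubmxK x) -(vsubmxK (usubmx x)) in px hx.
  move: px => /posv_col [/posv_col [p1 pb] p2].
  move/(@rate0 _ _ _ _ _ _ _ _ _ hf hr): hx; rewrite interZ_mul => hx.
  exists (usubmx (usubmx x)), (dsubmx x), (dsubmx (usubmx x)); split => //.
  + rewrite -!mulmxA -mulmxDr; apply/Keq_iff => j.
    by move: (hx (lshift r2 j)); rewrite joinc_l joinc_l !join_l !col_mxEu.
  + rewrite -!mulmxA -mulmxDr addrC; apply/Keq_iff => j.
    by move: (hx (rshift r1 j)); rewrite joinc_r joinc_r !join_r !col_mxEd.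
- case=> xh1 [xh2 [xb [p1 p2 pb e1 e2]]].
  exists (col_mx (col_mx xh1 xb) xh2); split.
    by apply/posv_col; split => //; apply/posv_col.
  apply/(@rate0 _ _ _ _ _ _ _ _ _ hf hr); rewrite interZ_mul => j.
  rewrite -(splitK j); case: (fintype.split j) => k /=.
  + rewrite joinc_l joinc_l !join_l !col_mxEu.
    by move: e1; rewrite -!mulmxA -mulmxDr => /Keq_iff; apply.
  + rewrite joinc_r joinc_r !join_r !col_mxEd.
    by move: e2; rewrite -!mulmxA -mulmxDr addrC => /Keq_iff; apply.
Qed.

Lemma lin_sub (p n b : nat) (A : 'M[R]_(p, n)) (C : 'M[R]_(p, b))
  (yf : 'I_b -> 'cV[R]_n) (I : {set 'I_b}) (d : 'cV[R]_b) :
  (forall k, k \in I -> col k C = A *m yf k) ->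
  (forall k, k \notin I -> d k 0 = 0) ->
  C *m d = A *m ((\matrix_(i, k) yf k i 0) *m d).
Proof.
move=> H H'; apply/matrixP => i j; rewrite ord1 mulmxA !mxE.
apply: eq_bigr => k _; case: (boolP (k \in I)) => hk.
- have := congr1 (fun M : 'cV[R]_p => M i 0) (H k hk); rewrite !mxE => ->.
  by congr (_ * _); apply: eq_bigr => l _; rewrite !mxE.
- by rewrite (H' k hk) !mulr0.
Qed.

End H.

Theorem proposition6 (R : realType) (n1 b n2 c1 c2 r1 r2 : nat)
  (Zh1 : 'M[R]_(n1, c1)) (Zb1 : 'M[R]_(b, c1))
  (Zb2 : 'M[R]_(b, c2)) (Zh2 : 'M[R]_(n2, c2))
  (S1 P1 : 'I_r1 -> 'I_c1) (S2 P2 : 'I_r2 -> 'I_c2)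
  (kf1 kr1 : 'I_r1 -> R) (kf2 kr2 : 'I_r2 -> R)
  (hkf1 : forall j, 0 < kf1 j) (hkr1 : forall j, 0 < kr1 j)
  (hkf2 : forall j, 0 < kf2 j) (hkr2 : forall j, 0 < kr2 j)
  (bal1 : balanced (col_mx Zh1 Zb1) S1 P1 kf1 kr1)
  (bal2 : balanced (col_mx Zb2 Zh2) S2 P2 kf2 kr2) :
  let B1 := incidence R S1 P1 in
  let B2 := incidence R S2 P2 in
  let balI := balanced (interZ Zh1 Zb1 Zb2 Zh2)
                (join_cplx S1 S2) (join_cplx P1 P2)
                (join_const kf1 kf2) (join_const kr1 kr2) in
  (balI <->
     exists (xh1 : 'cV[R]_n1) (xh2 : 'cV[R]_n2) (xb : 'cV[R]_b),
       [/\ posv xh1, posv xh2, posv xb &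
         Lnv (col_mx (Keq kf1 kr1) (Keq kf2 kr2)) =
         row_mx (row_mx (col_mx (B1^T *m Zh1^T) 0) (col_mx 0 (B2^T *m Zh2^T)))
                (col_mx (B1^T *m Zb1^T) (B2^T *m Zb2^T))
         *m Lnv (col_mx (col_mx xh1 xh2) xb)])
  /\
  ((exists I1 I2 : {set 'I_b},
       [/\ I1 :|: I2 = [set: 'I_b], I1 :&: I2 = finset.set0,
         (forall k, k \in I1 ->
            exists y : 'cV[R]_n1, col k (B1^T *m Zb1^T) = (B1^T *m Zh1^T) *m y) &
         (forall k, k \in I2 ->
            exists y : 'cV[R]_n2, col k (B2^T *m Zb2^T) = (B2^T *m Zh2^T) *m y)])
   -> balI).
Proof.
move=> B1 B2 balI.
have HI := @balI_iff R _ _ _ _ _ _ _ Zh1 Zb1 Zb2 Zh2 S1 P1 S2 P2 kf1 kr1 kf2 kr2 hkf1 hkr1 hkf2 hkr2.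
rewrite -/B1 -/B2 -/balI in HI.
split.
- rewrite HI; split.
  + case=> xh1 [xh2 [xb [p1 p2 pb e1 e2]]]; exists xh1, xh2, xb; split => //.
    rewrite !Lnv_col !mul_row_col !mul_col_mx !mul0mx !add_col_mx !addr0 !add0r.
    by rewrite e1 e2.
  + case=> xh1 [xh2 [xb [p1 p2 pb e]]]; exists xh1, xh2, xb.
    move: e; rewrite !Lnv_col !mul_row_col !mul_col_mx !mul0mx !add_col_mx !addr0 !add0r.
    by move/eq_col_mx => [e1 e2].
- case=> I1 [I2 [hU _ hI1 hI2]].
  apply/HI.
  case: bal1 => x1 [px1 hx1]; case: bal2 => x2 [px2 hx2].
  move/(@rate0 _ _ _ _ _ _ _ _ _ _ hkf1 hkr1): hx1 => /Keq_iff hx1.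
  move/(@rate0 _ _ _ _ _ _ _ _ _ _ hkf2 hkr2): hx2 => /Keq_iff hx2.
  rewrite -(vsubmxK x1) net_eq mulmxDr !mulmxA -/B1 in hx1.
  rewrite -(vsubmxK x2) net_eq mulmxDr !mulmxA -/B2 addrC in hx2.
  set u1 := Lnv (usubmx x1) in hx1; set w1 := Lnv (dsubmx x1) in hx1.
  set w2 := Lnv (usubmx x2) in hx2; set u2 := Lnv (dsubmx x2) in hx2.
  set w : 'cV[R]_b := \col_k (if k \in I1 then w2 k 0 else w1 k 0).
  have [yf1 hy1] : exists yf : 'I_b -> 'cV[R]_n1, forall k, k \in I1 ->
      col k (B1^T *m Zb1^T) = (B1^T *m Zh1^T) *m yf k.
    have /choice [f hf] : forall k, exists y : 'cV[R]_n1, k \in I1 ->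
      col k (B1^T *m Zb1^T) = (B1^T *m Zh1^T) *m y.
      move=> k; case: (boolP (k \in I1)) => hk; first by have [y hy] := hI1 k hk; exists y => _.
      by exists 0 => /negP.
    by exists f.
  have [yf2 hy2] : exists yf : 'I_b -> 'cV[R]_n2, forall k, k \in I2 ->
      col k (B2^T *m Zb2^T) = (B2^T *m Zh2^T) *m yf k.
    have /choice [f hf] : forall k, exists y : 'cV[R]_n2, k \in I2 ->
      col k (B2^T *m Zb2^T) = (B2^T *m Zh2^T) *m y.
      move=> k; case: (boolP (k \in I2)) => hk; first by have [y hy] := hI2 k hk; exists y => _.
      by exists 0 => /negP.
    by exists f.
  have d1 := @lin_sub R _ _ _ _ _ _ _ (w - w1) hy1.
  have d2 := @lin_sub R _ _ _ _ _ _ _ (w - w2) hy2.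
  have {d1}e1 : (B1^T *m Zb1^T) *m (w - w1) =
      (B1^T *m Zh1^T) *m ((\matrix_(i, k) yf1 k i 0) *m (w - w1)).
    by apply: d1 => k hk; rewrite !mxE (negbTE hk) subrr.
  have {d2}e2 : (B2^T *m Zb2^T) *m (w - w2) =
      (B2^T *m Zh2^T) *m ((\matrix_(i, k) yf2 k i 0) *m (w - w2)).
    apply: d2 => k hk; rewrite !mxE.
    have : k \in I1 :|: I2 by rewrite hU inE.
    by rewrite inE (negbTE hk) orbF => ->; rewrite subrr.
  rewrite mulmxBr in e1; rewrite mulmxBr in e2.
  exists (map_mx expR (u1 - (\matrix_(i, k) yf1 k i 0) *m (w - w1))),
    (map_mx expR (u2 - (\matrix_(i, k) yf2 k i 0) *m (w - w2))), (map_mx expR w).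
  rewrite !Lnv_exp; split; try exact: posv_exp.
  + by rewrite hx1 mulmxBr -e1 opprB addrA subrK.
  + by rewrite hx2 mulmxBr -e2 opprB addrA subrK.
Qed.
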